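(* Let $(X,\delta,\mu)\in\mathcal{N}(\widetilde\tau,c_1,c_2)$. Then for every $x\in X$, every $r>0$ and every $\varepsilon>0$, \[\mu\Bigl(B_\delta\bigl(x,\tfrac{(1+\varepsilon)c_2}{c_1}r\bigr)\setminus B_\delta(x,r)\Bigr)\geq\varepsilon c_2r>0.\]
   Context: $(X,\delta,\mu)\in\mathcal{N}(\widetilde\tau,c_1,c_2)$ means: $\delta$ is a quasi-distance on $X$ (nonnegative, symmetric, vanishing exactly on the diagonal, with $\delta(x,z)\leq\widetilde\tau[\delta(x,y)+\delta(y,z)]$), $\mu$ is a positive measure on a $\sigma$-algebra containing the $\delta$-balls $B_\delta(x,r)=\{y:\delta(x,y)<r\}$, $\mu(\{x\})=0$ for all $x$, $\mu(X)=+\infty$, and $0<c_1<c_2<\infty$ satisfy $c_1r\leq\mu(B_\delta(x,r))\leq c_2r$ for every $x\in X$ and $r>0$ (an unbounded non-atomic normal space of homogeneous type). *)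

(* Defs.v *)
From HB Require Import structures.
From mathcomp Require Import all_boot all_order all_algebra.
From mathcomp Require Import all_classical all_reals all_analysis.
Set Implicit Arguments. Unset Strict Implicit. Unset Printing Implicit Defensive.
Import Order.TTheory GRing.Theory Num.Theory.
Local Open Scope classical_set_scope.
Local Open Scope ring_scope.

Definition quasi_distance (R : realType) (X : Type) (tau : R) (delta : X -> X -> R) : Prop :=
  [/\ (forall x y, 0 <= delta x y),
      (forall x y, delta x y = delta y x),
      (forall x y, delta x y = 0 <-> x = y) &
      (forall x y z, delta x z <= tau * (delta x y + delta y z))].

Definition dball (R : realType) (X : Type) (delta : X -> X -> R) (x : X) (r : R) : set X :=
  [set y | delta x y < r].

Definition in_N (R : realType) (d : measure_display) (X : measurableType d)
  (delta : X -> X -> R) (mu : {measure set X -> \bar R}) (tau c1 c2 : R) : Prop :=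
  [/\ quasi_distance tau delta,
      (forall x r, measurable (dball delta x r)),
      (forall x, mu [set x] = 0%E),
      mu setT = +oo%E &
      [/\ 0 < c1, c1 < c2 &
          forall x r, 0 < r ->
            ((c1 * r)%:E <= mu (dball delta x r) <= (c2 * r)%:E)%E]].

(* Main.v *)
Require Import Defs.
From HB Require Import structures.
From mathcomp Require Import all_boot all_order all_algebra.
From mathcomp Require Import all_classical all_reals all_analysis.
From mathcomp Require Import ring lra.
Import Order.TTheory GRing.Theory Num.Theory.
Local Open Scope classical_set_scope.
Local Open Scope ring_scope.

Theorem lemma4p4 (R : realType) (d : measure_display) (X : measurableType d)
  (delta : X -> X -> R) (mu : {measure set X -> \bar R}) (tau c1 c2 : R) :
  in_N delta mu tau c1 c2 ->
  forall (x : X) (r eps : R), 0 < r -> 0 < eps ->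
    ((eps * c2 * r)%:E <=
       mu (dball delta x ((1 + eps) * c2 / c1 * r) `\` dball delta x r))%E /\
    0 < eps * c2 * r.
Proof.
move=> [_ hm _ _ [c1p c12 hb]] x r eps rp ep.
have c2p : 0 < c2 by apply: lt_trans c12.
split; last by rewrite !mulr_gt0.
set Rr := (1 + eps) * c2 / c1 * r.
have hRr : c1 * Rr = (1 + eps) * c2 * r.
  rewrite /Rr; field; exact: lt0r_neq0.
have rR : r <= Rr.
  rewrite /Rr -subr_ge0.
  have -> : (1 + eps) * c2 / c1 * r - r = ((1 + eps) * c2 - c1) / c1 * r.
    field; exact: lt0r_neq0.
  apply: mulr_ge0 => //; last exact: ltW.
  apply: divr_ge0; last exact: ltW.
  rewrite subr_ge0; nra.
have Rrp : 0 < Rr by apply: lt_le_trans rR.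
have sub : dball delta x r `<=` dball delta x Rr.
  by move=> y; rewrite /dball /= => h; apply: lt_le_trans rR.
have hU := @measureU _ _ _ mu (dball delta x Rr `\` dball delta x r)
   (dball delta x r) (measurableD (hm x Rr) (hm x r)) (hm x r).
rewrite setDKU // in hU.
have dis : (dball delta x Rr `\` dball delta x r) `&` dball delta x r = set0.
  by apply/seteqP; split => y // [[_ h1] h2].
move: (hU dis) => {}hU.
have /andP[h1 _] := hb x Rr Rrp.
have /andP[_ h2] := hb x r rp.
have h3 : (((1 + eps) * c2 * r)%:E <= mu (dball delta x Rr `\` dball delta x r) + mu (dball delta x r))%E.
  by rewrite -hU -hRr.
move: h3 h2 => {h1 hU}.
move: (mu (dball delta x Rr `\` dball delta x r)) (mu (dball delta x r)) (measure_ge0 mu (dball delta x r)).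
move=> [a| |] [b| |] //= hb0.
- rewrite -EFinD !lee_fin => h1 h2; nra.
- by move=> *; rewrite leey.
Qed.
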